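(* Let the standing assumptions (listed in the context) hold and let $(x_k)$ be generated by Algorithm SLBFGS. Then there is a constant $C>0$ such that $\|B_k\|+\|B_k^{-1}\|\le C\max\{1,\|\nabla\mathcal{J}(x_k)\|^{-c_2}\}$ for all $k\ge0$, where $c_2$ is the constant from Algorithm SLBFGS.
   Context: Let $\mathcal{X}$ be a Hilbert space and $\mathcal{J}:\mathcal{X}\to\mathbb{R}$. Algorithm SLBFGS (structured inverse L-BFGS): inputs $x_0\in\mathcal{X}$, $\epsilon\geq0$, $\ell\in\mathbb{N}_0$, $c_0\geq 0$, $C_0\in[c_0,\infty]$, $c_s,c_1,c_2>0$; let $\tau_0>0$. For $k=0,1,2,\ldots$: let $m=\max\{0,k-\ell\}$; choose a symmetric positive semi-definite bounded linear operator $S_k$; set $B_k^{(0)}=\tau_k I+S_k$; let $B_k$ be obtained from $B_k^{(0)}$ and the currently stored pairs $(s_j,y_j)$, $m\le j\le k-1$, by successive L-BFGS updates $B\mapsto B+\frac{yy^T}{y^Ts}-\frac{Bss^TB}{s^TBs}$; set $d_k=-B_k^{-1}\nabla\mathcal{J}(x_k)$; compute a step length $\alpha_k>0$ by a line search; set $s_k=\alpha_kd_k$, $x_{k+1}=x_k+s_k$, $y_k=\nabla\mathcal{J}(x_{k+1})-\nabla\mathcal{J}(x_k)$; store $(s_k,y_k)$ only if $y_k^Ts_k>c_s\|s_k\|^2$; if $k\ge\ell$ remove $(s_m,y_m)$ from storage; stop with output $x_{k+1}$ if $\|\nabla\mathcal{J}(x_{k+1})\|\le\epsilon$; set $z_k=y_k-S_{k+1}s_k$,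 $\omega^l_{k+1}=\min\{c_0,c_1\|\nabla\mathcal{J}(x_{k+1})\|^{c_2}\}$, $\omega^u_{k+1}=\max\{C_0,(c_1\|\nabla\mathcal{J}(x_{k+1})\|^{c_2})^{-1}\}$; with $P(t)=\min\{\max\{t,\omega^l_{k+1}\},\omega^u_{k+1}\}$ and $\rho=z_k^Ts_k$ let $\tau^s=P(\rho/\|s_k\|^2)$, $\tau^g=P(\|z_k\|/\|s_k\|)$, $\tau^z=P(\|z_k\|^2/\rho)$; if $\rho>0$ choose $\tau_{k+1}\in[\tau^s,\tau^z]$, else choose $\tau_{k+1}\in[\tau^s,\tau^g]$. Line searches: Armijo with backtracking means, for fixed $\beta,\sigma\in(0,1)$, $\alpha_k$ is the largest number in $\{1,\beta,\beta^2,\ldots\}$ with $\mathcal{J}(x_{k+1})\le\mathcal{J}(x_k)+\alpha_k\sigma\nabla\mathcal{J}(x_k)^Td_k$; the Wolfe–Powell conditions are this Armijo inequality together with $\nabla\mathcal{J}(x_{k+1})^Td_k\ge\eta\nabla\mathcal{J}(x_k)^Td_k$ for fixed $\eta\in(\sigma,1)$. Let $\Omega=\{x:\mathcal{J}(x)\le\mathcal{J}(x_0)\}$ and $\Omega_\delta=\{x:\exists\hat x\in\Omega,\ \|x-\hat x\|<\delta\}$. Standing assumptions: 1) $\mathcal{J}$ is continuously differentiable and bounded below; 2) $\nabla\mathcal{J}$ is Lipschitz continuous on $\Omega$ with constant $L>0$; 3) $(\|S_k\|)$ is bounded; 4) the step sizes consistently satisfy the Armijo condition computed by backtracking, or consistently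 satisfy the Wolfe–Powell conditions; in the Armijo case there is $\delta>0$ such that $\mathcal{J}$ or $\nabla\mathcal{J}$ is uniformly continuous on $\Omega_\delta$; 5) $c_0=0$ is only chosen if then $\sup_k\|(B_k^{(0)})^{-1}\|<\infty$; 6) $C_0=\infty$ is only chosen if either the interval $[\tau^s,\tau^z]$ is replaced by $[\tau^s,\tau^g]$, or $\mathcal{J}$ is twice continuously differentiable, $\overline{G_k}:=\int_0^1\nabla^2\mathcal{J}(x_k+ts_k)\,dt-S_{k+1}$ is symmetric positive semi-definite for all $k$ and $(\|\overline{G_k}\|)$ is bounded. *)

(* Defs.v *)
From HB Require Import structures.
From mathcomp Require Import all_boot all_order all_algebra.
From mathcomp Require Import all_classical all_reals all_analysis.
Set Implicit Arguments. Unset Strict Implicit. Unset Printing Implicit Defensive.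
Import Order.TTheory GRing.Theory Num.Theory.
Import numFieldNormedType.Exports.
Local Open Scope classical_set_scope.
Local Open Scope ring_scope.

Section SLBFGS.
Variables (R : realType) (X : completeNormedModType R).

Definition is_inner_product (ip : X -> X -> R) : Prop :=
  [/\ (forall a u v w, ip (a *: u + v) w = a * ip u w + ip v w),
      (forall u v, ip u v = ip v u) &
      (forall u, ip u u = `|u| ^+ 2)].

Definition is_linear_op (T : X -> X) : Prop :=
  forall a u v, T (a *: u + v) = a *: T u + T v.

(* operator norm, in the extended reals (+oo for unbounded T) *)
Definition opnorm (T : X -> X) : \bar R :=
  ereal_sup [set (`|T u|)%:E | u in [set u : X | `|u| <= 1]].

Definition sym_psd_bounded (ip : X -> X -> R) (T : X -> X) : Prop :=
  [/\ is_linear_op T,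
      (forall u v, ip (T u) v = ip u (T v)),
      (forall u, 0 <= ip u (T u)) &
      (opnorm T < +oo)%E].

Definition is_inverse (T Tinv : X -> X) : Prop :=
  (forall u, T (Tinv u) = u) /\ (forall u, Tinv (T u) = u).

(* x : iterates, g : gradient map of J, S : structured part, tau : scalings *)
Variables (ip : X -> X -> R) (g : X -> X) (x : nat -> X).

Definition s_ (k : nat) : X := x k.+1 - x k.
Definition y_ (k : nat) : X := g (x k.+1) - g (x k).

(* the algorithm has not stopped before iteration k, i.e. x_k (and B_k) are
   computed: no stop test at iterations 0..k-1 succeeded *)
Definition running (eps : R) (k : nat) : Prop :=
  forall j, (j < k)%N -> eps < `|g (x j.+1)|.

(* (s_j, y_j) is stored at iteration j *)
Definition accepted (cs : R) (j : nat) : bool :=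
  cs * `|s_ j| ^+ 2 < ip (y_ j) (s_ j).

(* L-BFGS update  B |-> B + y y^T/(y^T s) - B s s^T B/(s^T B s) *)
Definition lbfgs_update (B : X -> X) (s y : X) : X -> X :=
  fun v => B v + (ip y v / ip y s) *: y - (ip s (B v) / ip s (B s)) *: B s.

Definition B0_ (S : nat -> X -> X) (tau : nat -> R) (k : nat) : X -> X :=
  fun v => tau k *: v + S k v.

(* B_k: successive updates of B_k^(0) with the stored pairs j = m..k-1,
   m = max(0, k - l), in increasing order *)
Definition Bk (cs : R) (l : nat) (S : nat -> X -> X) (tau : nat -> R)
    (k : nat) : X -> X :=
  let m := (k - l)%N in
  foldl (fun B j => if accepted cs j then lbfgs_update B (s_ j) (y_ j) else B)
        (B0_ S tau k) (iota m (k - m)).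

Definition Pproj (wl : R) (wu : \bar R) (t : R) : \bar R :=
  Order.min (Num.max t wl)%:E wu.

(* the admissible choice of tau_{k+1} (use_g : the variant where [tau^s,tau^z]
   is replaced by [tau^s,tau^g]) *)
Definition tau_rule (c0 : R) (C0 : \bar R) (c1 c2 : R) (use_g : bool)
    (S : nat -> X -> X) (tau : nat -> R) (k : nat) : Prop :=
  let sk := s_ k in
  let zk := y_ k - S k.+1 sk in
  let gn := `|g (x k.+1)| in
  let wl := Num.min c0 (c1 * gn `^ c2) in
  let wu := Order.max C0 ((c1 * gn `^ c2)^-1)%:E in
  let rho := ip zk sk in
  let taus := Pproj wl wu (rho / `|sk| ^+ 2) in
  let taug := Pproj wl wu (`|zk| / `|sk|) in
  let tauz := Pproj wl wu (`|zk| ^+ 2 / rho) in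
  if (0 < rho) && ~~ use_g then (taus <= (tau k.+1)%:E <= tauz)%E
  else (taus <= (tau k.+1)%:E <= taug)%E.

End SLBFGS.

Section Aux.
Variables (R : realType) (X : completeNormedModType R).
Variables (ip : X -> X -> R) (J : X -> R) (g : X -> X).

Definition armijo (sigma : R) (xk dk : X) (a : R) : Prop :=
  J (xk + a *: dk) <= J xk + a * sigma * ip (g xk) dk.

Definition armijo_backtracking (beta sigma : R) (xk dk : X) (alpha : R) : Prop :=
  exists i : nat, alpha = beta ^+ i /\ armijo sigma xk dk (beta ^+ i) /\
    forall i' : nat, (i' < i)%N -> ~ armijo sigma xk dk (beta ^+ i').

Definition wolfe_powell (sigma eta : R) (xk dk : X) (alpha : R) : Prop :=
  0 < alpha /\ armijo sigma xk dk alpha /\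
  eta * ip (g xk) dk <= ip (g (xk + alpha *: dk)) dk.

Definition Omega (x0 : X) : set X := [set u | J u <= J x0].
Definition Omega_delta (x0 : X) (delta : R) : set X :=
  [set u | exists2 v, Omega x0 v & `|u - v| < delta].

Definition unif_cont_on {Y : normedModType R} (A : set X) (f : X -> Y) : Prop :=
  forall e : R, 0 < e -> exists2 r : R, 0 < r &
    forall u v, A u -> A v -> `|u - v| < r -> `|f u - f v| < e.

Definition C1_with_gradient : Prop :=
  (forall u, differentiable J u) /\
  (forall u v, 'd J u v = ip (g u) v) /\ continuous g.

Definition C2 : Prop :=
  (forall u, differentiable g u) /\
  forall u (e : R), 0 < e -> exists2 r : R, 0 < r &
    forall w, `|w - u| < r ->
      (opnorm (fun v => ('d g w v - 'd g u v)%R) <= e%:E)%E.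

(* bilinear form of Gbar_k = int_0^1 Hess J(x_k + t s_k) dt - S_{k+1}:
   (u, v) |-> <u, Gbar_k v> *)
Definition Gbar_form (x : nat -> X) (S : nat -> X -> X) (k : nat) (u v : X) : R :=
  Rintegral lebesgue_measure `[0%R, 1%R]
    (fun t => ip u ('d g (x k + t *: s_ x k) v)) - ip u (S k.+1 v).

End Aux.

(* Main.v *)
Require Import Defs.
From HB Require Import structures.
From mathcomp Require Import all_boot all_order all_algebra.
From mathcomp Require Import all_classical all_reals all_analysis.
From mathcomp Require Import ring lra.
Set Implicit Arguments. Unset Strict Implicit. Unset Printing Implicit Defensive.
Import Order.TTheory GRing.Theory Num.Theory.
Import numFieldNormedType.Exports.
Local Open Scope classical_set_scope.
Local Open Scope ring_scope.

Section IP.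
Variables (R : realType) (X : completeNormedModType R) (ip : X -> X -> R).
Hypothesis Hip : is_inner_product ip.

Lemma ipC u v : ip u v = ip v u.
Proof. by case: Hip. Qed.
Lemma ipvv u : ip u u = `|u| ^+ 2.
Proof. by case: Hip. Qed.
Lemma ipDZl a u v w : ip (a *: u + v) w = a * ip u w + ip v w.
Proof. by case: Hip. Qed.
Lemma ip0l w : ip 0 w = 0.
Proof.
have h := ipDZl 1 0 0 w; rewrite scale1r addr0 mul1r in h; lra.
Qed.
Lemma ipDl u v w : ip (u + v) w = ip u w + ip v w.
Proof. by have := ipDZl 1 u v w; rewrite scale1r mul1r. Qed.
Lemma ipZl a u w : ip (a *: u) w = a * ip u w.
Proof. by rewrite -(addr0 (a *: u)) ipDZl ip0l addr0. Qed.
Lemma ipNl u w : ip (- u) w = - ip u w.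
Proof. by rewrite -scaleN1r ipZl mulN1r. Qed.
Lemma ipBl u v w : ip (u - v) w = ip u w - ip v w.
Proof. by rewrite ipDl ipNl. Qed.
Lemma ip0r w : ip w 0 = 0.
Proof. by rewrite ipC ip0l. Qed.
Lemma ipDr u v w : ip w (u + v) = ip w u + ip w v.
Proof. by rewrite ipC ipDl !(ipC w). Qed.
Lemma ipZr a u w : ip w (a *: u) = a * ip w u.
Proof. by rewrite ipC ipZl ipC. Qed.
Lemma ipNr u w : ip w (- u) = - ip w u.
Proof. by rewrite ipC ipNl ipC. Qed.
Lemma ipBr u v w : ip w (u - v) = ip w u - ip w v.
Proof. by rewrite ipDr ipNr. Qed.

End IP.

Lemma quad_disc (R : realType) (A B C : R) :
  (forall t, 0 <= A + 2 * t * B + t ^+ 2 * C) -> B ^+ 2 <= A * C.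
Proof.
move=> H.
have hA : 0 <= A by have := H 0; rewrite mulr0 mul0r expr0n /= mul0r !addr0.
have [C0|C0] := ltP 0 C.
  have := H (- B / C).
  have -> : A + 2 * (- B / C) * B + (- B / C) ^+ 2 * C = A - B ^+ 2 / C.
    by field; rewrite gt_eqF.
  by rewrite subr_ge0 ler_pdivrMr // mulrC.
have [Cn|Cz] := ltP C 0.
  exfalso.
  pose t := (A + 1) / (- C) + 1.
  have h1 := H t; have h2 := H (- t).
  have ht1 : 1 <= t by rewrite /t lerDr divr_ge0 // ?oppr_ge0 ?ltW //; lra.
  have ht2 : t * (- C) >= A + 1.
    rewrite /t mulrDl divfK ?oppr_eq0 ?lt_eqF //; lra.
  have ht3 : t ^+ 2 * (- C) >= t * (- C).
    by rewrite expr2 -mulrA ler_peMl // mulr_ge0 // ?oppr_ge0 ?ltW //; lra.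
  nra.
have C00 : C = 0 by apply/eqP; rewrite eq_le C0 Cz.
have [B0|B0] := eqVneq B 0.
  by rewrite B0 C00 expr0n /= mulr0.
exfalso.
have := H (- (A + 1) / (2 * B)).
have -> : A + 2 * (- (A + 1) / (2 * B)) * B = -1.
  by field.
rewrite C00 mulr0 addr0; lra.
Qed.

Lemma form_CS (R : realType) (X : completeNormedModType R) (q : X -> X -> R) :
  (forall a u v w, q (a *: u + v) w = a * q u w + q v w) ->
  (forall u v, q u v = q v u) -> (forall u, 0 <= q u u) ->
  forall u v, q u v ^+ 2 <= q u u * q v v.
Proof.
move=> lin sym psd u v; apply: quad_disc => t.
have qDr : forall a u v w, q w (a *: u + v) = a * q w u + q w v.
  by move=> a u1 v1 w; rewrite sym lin !(sym w).
have := psd (t *: v + u).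
rewrite lin !qDr (sym u v).
by rewrite [X in 0 <= X -> _](_ : _ = q u u + 2 * t * q v u + t ^+ 2 * q v v);
  [| ring].
Qed.

Lemma abs_le_of_sqr (R : realType) (a b : R) : 0 <= b -> a ^+ 2 <= b ^+ 2 -> `|a| <= b.
Proof. move=> hb h; case: (ger0P a) => ha; nra. Qed.

Section Ops.
Variables (R : realType) (X : completeNormedModType R) (ip : X -> X -> R).
Hypothesis Hip : is_inner_product ip.

Definition symm (T : X -> X) := forall u v, ip (T u) v = ip u (T v).
Definition psd (T : X -> X) := forall u, 0 <= ip u (T u).

Lemma ip_CS u v : `|ip u v| <= `|u| * `|v|.
Proof.
apply: abs_le_of_sqr; first by rewrite mulr_ge0.
have psd0 : forall w, 0 <= ip w w by move=> w; rewrite (ipvv Hip) sqr_ge0.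
by have := form_CS (ipDZl Hip) (ipC Hip) psd0 u v; rewrite !(ipvv Hip) -exprMn.
Qed.

Section Lin.
Variable T : X -> X.
Hypothesis HT : is_linear_op T.
Lemma lin0 : T 0 = 0.
Proof.
have h := HT 1 0 0; rewrite scale1r addr0 scale1r in h.
by apply: (addrI (T 0)); rewrite addr0 -h.
Qed.
Lemma linD u v : T (u + v) = T u + T v.
Proof. by have := HT 1 u v; rewrite !scale1r. Qed.
Lemma linZ a u : T (a *: u) = a *: T u.
Proof. by have := HT a u 0; rewrite !addr0 lin0 addr0. Qed.
Lemma linN u : T (- u) = - T u.
Proof. by rewrite -scaleN1r linZ scaleN1r. Qed.
Lemma linB u v : T (u - v) = T u - T v.
Proof. by rewrite linD linN. Qed.
End Lin.

Lemma Tform_CS T : is_linear_op T -> symm T -> psd T ->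
  forall u v, ip (T u) v ^+ 2 <= ip (T u) u * ip (T v) v.
Proof.
move=> HT sT pT; apply: form_CS.
- by move=> a u v w; rewrite HT (ipDZl Hip).
- by move=> u v; rewrite sT (ipC Hip).
- by move=> u; rewrite (ipC Hip).
Qed.

Lemma norm_form T q : is_linear_op T -> symm T -> psd T ->
  (forall u, ip u (T u) <= q * `|u| ^+ 2) -> forall u, `|T u| <= q * `|u|.
Proof.
move=> HT sT pT hq u.
have h := Tform_CS HT sT pT u (T u).
rewrite (ipvv Hip) (ipC Hip (T u) u) (ipC Hip (T (T u))) in h.
have h1 := hq u; have h2 := hq (T u).
have p1 := pT u; have p2 := pT (T u).
have [u0|u0] := eqVneq u 0.
  by rewrite u0 lin0 // !normr0 mulr0.
have nu : 0 < `|u| by rewrite normr_gt0.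
have q0 : 0 <= q.
  have : 0 <= q * `|u| ^+ 2 by apply: le_trans h1.
  by rewrite pmulr_lge0 // exprn_gt0.
have [Tu0|Tu0] := eqVneq (T u) 0.
  by rewrite Tu0 normr0 mulr_ge0.
have nTu : 0 < `|T u| by rewrite normr_gt0.
set a := `|T u| in h h2 nTu *; set b := `|u| in h1 nu *.
set A := ip u (T u) in h h1 p1; set B := ip (T u) (T (T u)) in h h2 p2.
have h3 : (a ^+ 2) * (a ^+ 2) <= ((q * b) ^+ 2) * (a ^+ 2).
  rewrite -expr2 (_ : (q * b) ^+ 2 * a ^+ 2 = (q * b ^+ 2) * (q * a ^+ 2));
    last by ring.
  by apply: le_trans h _; apply: ler_pM.
rewrite ler_pM2r ?exprn_gt0 // in h3.
have := abs_le_of_sqr (mulr_ge0 q0 (ltW nu)) h3.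
by rewrite ger0_norm // ltW.
Qed.

Lemma opnorm_le (T : X -> X) K : 0 <= K -> (forall u, `|T u| <= K * `|u|) ->
  (opnorm T <= K%:E)%E.
Proof.
move=> K0 hK; apply: ge_ereal_sup => _ [u /= u1 <-].
rewrite lee_fin; apply: le_trans (hK u) _.
by rewrite -{2}(mulr1 K); apply: ler_wpM2l.
Qed.

Lemma opnorm_bnd (T : X -> X) K : is_linear_op T -> (opnorm T <= K%:E)%E ->
  forall u, `|T u| <= K * `|u|.
Proof.
move=> HT hK u.
have [u0|u0] := eqVneq u 0.
  by rewrite u0 lin0 // !normr0 mulr0.
have nu : 0 < `|u| by rewrite normr_gt0.
have h : ((`|T (`|u|^-1 *: u)|)%:E <= opnorm T)%E.
  apply: ereal_sup_ubound; exists (`|u|^-1 *: u) => //=.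
  by rewrite normrZ normrV ?unitfE ?gt_eqF // normr_id mulVf ?gt_eqF.
have := le_trans h hK; rewrite lee_fin linZ // normrZ normrV ?unitfE ?gt_eqF //.
by rewrite normr_id ler_pdivrMl // mulrC.
Qed.

Lemma inv_linear (T H : X -> X) : is_linear_op T -> is_inverse T H ->
  is_linear_op H.
Proof.
move=> HT [TH HT'] a u v.
by rewrite -{1}(TH u) -{1}(TH v) -linZ // -linD // HT'.
Qed.

Lemma coercive_right_inv_bound (T H : X -> X) c : 0 < c ->
  (forall u, c * `|u| ^+ 2 <= ip u (T u)) -> (forall v, T (H v) = v) ->
  forall v, `|H v| <= c^-1 * `|v|.
Proof.
move=> c0 hc TH v.
have h := hc (H v); rewrite TH in h.
have h2 := le_trans h (ler_norm _); have h3 := le_trans h2 (ip_CS _ _).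
have [Hv0|Hv0] := eqVneq (H v) 0.
  by rewrite Hv0 normr0 mulr_ge0 // invr_ge0 ltW.
have nH : 0 < `|H v| by rewrite normr_gt0.
rewrite expr2 mulrA [`|H v| * `|v|]mulrC ler_pM2r // in h3.
by rewrite -(ler_pM2l c0) mulrA mulfV ?gt_eqF // mul1r.
Qed.

Lemma coercive_inj (T : X -> X) c : is_linear_op T -> 0 < c ->
  (forall u, c * `|u| ^+ 2 <= ip u (T u)) -> forall u v, T u = T v -> u = v.
Proof.
move=> HT c0 hc u v e.
have := hc (u - v); rewrite linB // e subrr (ip0r Hip).
move=> h; apply/eqP; rewrite -subr_eq0 -normr_le0.
have : `|u - v| ^+ 2 <= 0 by rewrite -(pmulr_rle0 _ c0).
by rewrite -[X in _ <= X](expr0n R 2) ler_pXn2r // ?nnegrE.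
Qed.

End Ops.

Section Step.
Variables (R : realType) (X : completeNormedModType R) (ip : X -> X -> R).
Hypothesis Hip : is_inner_product ip.

Let ipDl := ipDl Hip. Let ipZl := ipZl Hip. Let ipNl := ipNl Hip.
Let ipBl := ipBl Hip. Let ipDr := ipDr Hip. Let ipZr := ipZr Hip.
Let ipNr := ipNr Hip. Let ipBr := ipBr Hip. Let ipC := ipC Hip.

Lemma ip_ext (e1 e2 : X) : (forall w, ip e1 w = ip e2 w) -> e1 = e2.
Proof.
move=> h; apply/eqP; rewrite -subr_eq0 -normr_eq0 -sqrf_eq0 -(ipvv Hip).
by rewrite ipBl !h subrr.
Qed.

Lemma upd_linear (B : X -> X) s y : is_linear_op B ->
  is_linear_op (lbfgs_update ip B s y).
Proof.
move=> HB a u v; apply: ip_ext => w; rewrite /lbfgs_update HB.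
rewrite !(ipDl, ipZl, ipNl, ipBl, ipDr, ipZr, ipNr, ipBr).
by ring.
Qed.

Lemma upd_symm (B : X -> X) s y : is_linear_op B -> symm ip B ->
  symm ip (lbfgs_update ip B s y).
Proof.
move=> HB sB u v; rewrite /lbfgs_update.
rewrite !(ipDl, ipZl, ipNl, ipBl, ipDr, ipZr, ipNr, ipBr).
rewrite sB (ipC u y) (sB s v) (ipC u (B s)) (sB s u).
by ring.
Qed.

Lemma upd_psd (B : X -> X) s y : is_linear_op B -> symm ip B -> psd ip B ->
  0 < ip y s -> psd ip (lbfgs_update ip B s y).
Proof.
move=> HB sB pB b0 u; rewrite /lbfgs_update.
rewrite !(ipDl, ipZl, ipNl, ipBl, ipDr, ipZr, ipNr, ipBr).
rewrite (ipC u y) (ipC u (B s)) (sB s u).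
have hCS := Tform_CS Hip HB sB pB s u.
rewrite (sB s u) (sB s s) (sB u u) in hCS.
have p1 := pB u; have p2 := pB s.
set A := ip s (B s) in hCS p2 *; set c := ip s (B u) in hCS *.
set d := ip u (B u) in hCS p1 *; set e := ip y u; set b := ip y s in b0 *.
have t1 : 0 <= e / b * e by rewrite mulrAC -expr2 divr_ge0 // ?sqr_ge0 ?ltW.
have t2 : c / A * c <= d.
  have [A0|A0] := eqVneq A 0; first by rewrite A0 invr0 mulr0 mul0r.
  have Ap : 0 < A by rewrite lt_def A0.
  by rewrite mulrAC -expr2 ler_pdivrMr // mulrC.
lra.
Qed.

Lemma upd_form (B : X -> X) s y Lam L cs : is_linear_op B -> symm ip B ->
  psd ip B ->
  (forall u, ip u (B u) <= Lam * `|u| ^+ 2) -> 0 < cs ->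
  cs * `|s| ^+ 2 < ip y s -> `|y| <= L * `|s| ->
  forall u, ip u (lbfgs_update ip B s y u) <= (Lam + L ^+ 2 / cs) * `|u| ^+ 2.
Proof.
move=> HB sB pB hL cs0 hb hy u; rewrite /lbfgs_update.
rewrite !(ipDl, ipZl, ipNl, ipBl, ipDr, ipZr, ipNr, ipBr).
rewrite (ipC u y) (ipC u (B s)) (sB s u).
have b0 : 0 < ip y s by apply: le_lt_trans hb; rewrite mulr_ge0 // ltW.
have t1 : ip s (B u) / ip s (B s) * ip s (B u) >= 0.
  by rewrite mulrAC -expr2 divr_ge0 ?sqr_ge0 //.
have he : `|ip y u| <= L * `|s| * `|u|.
  by apply: le_trans (ip_CS Hip _ _) _; rewrite ler_wpM2r.
have he2 : ip y u ^+ 2 <= (L * `|s| * `|u|) ^+ 2.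
  by move: he; case: (ger0P (ip y u)) => h he; nra.
have t2 : ip y u / ip y s * ip y u <= L ^+ 2 / cs * `|u| ^+ 2.
  rewrite mulrAC -expr2 ler_pdivrMr //.
  apply: le_trans he2 _.
  have -> : (L * `|s| * `|u|) ^+ 2 = L ^+ 2 / cs * `|u| ^+ 2 * (cs * `|s| ^+ 2).
    by field; rewrite gt_eqF.
  apply: ler_wpM2l; last exact: ltW.
  by rewrite mulr_ge0 ?divr_ge0 ?sqr_ge0 // ltW.
have := hL u; lra.
Qed.

Definition upd_inv (H : X -> X) (s y : X) : X -> X := fun w =>
  H w - (ip y (H w) / ip y s) *: s - (ip s w / ip y s) *: H y
  + ((ip y s + ip y (H y)) / (ip y s ^+ 2) * ip s w) *: s.

Lemma upd_inverse (B H : X -> X) s y : is_linear_op B -> symm ip B ->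
  psd ip B -> is_inverse B H -> 0 < ip y s ->
  is_inverse (lbfgs_update ip B s y) (upd_inv H s y).
Proof.
move=> HB sB pB [BH HB'] b0.
have HH : is_linear_op H by apply: (inv_linear (H:=H) HB).
have s0 : s != 0.
  by apply/eqP => s0; move: b0; rewrite s0 (ip0r Hip) ltxx.
have a0 : ip s (B s) != 0.
  apply/eqP => a0; move/eqP: s0; apply.
  have hCS u := Tform_CS Hip HB sB pB s u.
  have Bs0 : B s = 0.
    apply/eqP; rewrite -normr_eq0 -sqrf_eq0 -(ipvv Hip) -sqrf_eq0.
    rewrite eq_le sqr_ge0 andbT; apply: le_trans (hCS (B s)) _.
    by rewrite sB a0 mul0r.
  by rewrite -(HB' s) Bs0 lin0.
have b00 : ip y s != 0 by rewrite gt_eqF.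
split => w; apply: ip_ext => t; rewrite /lbfgs_update /upd_inv.
- rewrite !(linD HB, linB HB, linZ HB, linN HB) !BH.
  rewrite !(ipDl, ipZl, ipNl, ipBl, ipDr, ipZr, ipNr, ipBr).
  rewrite ?BH (ipC s y).
  by field; rewrite a0 b00.
- rewrite !(linD HH, linB HH, linZ HH, linN HH) !HB'.
  rewrite !(ipDl, ipZl, ipNl, ipBl, ipDr, ipZr, ipNr, ipBr).
  rewrite (ipC s y).
  by field; rewrite a0 b00.
Qed.

Lemma upd_inv_bound (H : X -> X) s y h L cs :
  (forall w, `|H w| <= h * `|w|) -> 0 <= h -> 0 < cs ->
  cs * `|s| ^+ 2 < ip y s -> `|y| <= L * `|s| ->
  forall w, `|upd_inv H s y w| <= (h * (1 + L / cs) ^+ 2 + cs^-1) * `|w|.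
Proof.
move=> hH h0 cs0 hb hy w; rewrite /upd_inv.
have b0 : 0 < ip y s by apply: le_lt_trans hb; rewrite mulr_ge0 // ltW.
have s0 : s != 0.
  by apply/eqP => s0; move: b0; rewrite s0 (ip0r Hip) ltxx.
have P0 : 0 < `|s| by rewrite normr_gt0.
set b := ip y s in hb b0 *; set P := `|s| in hb hy P0 *.
set Y := `|y| in hy *; set W := `|w|.
have Y0 : 0 <= Y by rewrite normr_ge0.
have W0 : 0 <= W by rewrite normr_ge0.
have L0 : 0 <= L.
  have : 0 <= L * P by apply: le_trans hy.
  by rewrite pmulr_lge0.
have k1 : Y * P / b <= L / cs.
  rewrite ler_pdivrMr // mulrAC ler_pdivlMr //.
  apply: le_trans (_ : L * P * P * cs <= _).
    by apply: ler_wpM2r; [exact: ltW | apply: ler_wpM2r; [exact: ltW|]].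
  by rewrite -mulrA -mulrA ler_wpM2l // mulrA -expr2 mulrC ltW.
have k2 : P ^+ 2 / b <= cs^-1.
  by rewrite ler_pdivrMr // mulrC ler_pdivlMr // mulrC ltW.
have k10 : 0 <= Y * P / b by rewrite divr_ge0 ?mulr_ge0 // ltW.
have k20 : 0 <= P ^+ 2 / b by rewrite divr_ge0 ?sqr_ge0 // ltW.
have iy : `|ip y (H w)| <= Y * (h * W).
  by apply: le_trans (ip_CS Hip _ _) _; rewrite ler_wpM2l.
have iss : `|ip s w| <= P * W by apply: ip_CS.
have iyy : `|ip y (H y)| <= Y * (h * Y).
  by apply: le_trans (ip_CS Hip _ _) _; rewrite ler_wpM2l.
have T2 : `|(ip y (H w) / b) *: s| <= h * W * (Y * P / b).
  rewrite normrZ normrM normrV ?unitfE ?gt_eqF // (gtr0_norm b0).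
  rewrite (_ : h * W * (Y * P / b) = Y * (h * W) / b * P); last by ring.
  apply: ler_wpM2r; first exact: ltW.
  by apply: ler_wpM2r => //; rewrite invr_ge0 ltW.
have T3 : `|(ip s w / b) *: H y| <= h * W * (Y * P / b).
  rewrite normrZ normrM normrV ?unitfE ?gt_eqF // (gtr0_norm b0).
  rewrite (_ : h * W * (Y * P / b) = P * W / b * (h * Y)); last by ring.
  apply: ler_pM => //.
  - by rewrite divr_ge0 // ltW.
  - by apply: ler_wpM2r => //; rewrite invr_ge0 ltW.
have T4 : `|((b + ip y (H y)) / b ^+ 2 * ip s w) *: s| <=
    (P ^+ 2 / b + h * (Y * P / b) ^+ 2) * W.
  rewrite normrZ !normrM normrV ?unitfE ?expf_neq0 ?gt_eqF //.
  rewrite [`|b ^+ 2|]ger0_norm ?sqr_ge0 //.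
  have hbb : `|b + ip y (H y)| <= b + h * Y ^+ 2.
    apply: le_trans (ler_normD _ _) _; rewrite gtr0_norm //.
    by rewrite lerD2l (le_trans iyy) // expr2 mulrCA.
  apply: le_trans (_ : (b + h * Y ^+ 2) / b ^+ 2 * (P * W) * P <= _).
    apply: ler_wpM2r; first by rewrite ltW.
    apply: ler_pM => //; first by rewrite divr_ge0 ?sqr_ge0.
    by apply: ler_wpM2r => //; rewrite invr_ge0 sqr_ge0.
  by rewrite le_eqVlt; apply/orP; left; apply/eqP; field; rewrite gt_eqF.
have T1 := hH w.
apply: le_trans (ler_normD _ _) _.
apply: le_trans (lerD (ler_normB _ _) (lexx _)) _.
apply: le_trans (lerD (lerD (ler_normB _ _) (lexx _)) (lexx _)) _.
set k := Y * P / b in T2 T3 T4 k1 k10.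
have hk : (1 + k) ^+ 2 <= (1 + L / cs) ^+ 2.
  move: k1 k10; set m := L / cs => k1 k10; nra.
have hk2 : h * W * (1 + k) ^+ 2 <= h * W * (1 + L / cs) ^+ 2.
  by rewrite ler_wpM2l // mulr_ge0.
have hk3 : P ^+ 2 / b * W <= cs^-1 * W by rewrite ler_wpM2r.
have : h * W * (1 + k) ^+ 2 = h * W + 2 * (h * W * k) + h * k ^+ 2 * W.
  by ring.
rewrite -/W in T1; lra.
Qed.

End Step.

Section Fold.
Variables (R : realType) (X : completeNormedModType R) (ip : X -> X -> R).
Hypothesis Hip : is_inner_product ip.

Definition weak (B : X -> X) := [/\ is_linear_op B, symm ip B & psd ip B].

Definition inv_ok (B : X -> X) (Lam h : R) :=
  [/\ is_linear_op B, symm ip B, psd ip B,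
      (forall u, ip u (B u) <= Lam * `|u| ^+ 2) &
      exists2 H, is_inverse B H & forall w, `|H w| <= h * `|w|].

Lemma inv_ok_mono B Lam h Lam' h' : inv_ok B Lam h -> Lam <= Lam' -> h <= h' ->
  inv_ok B Lam' h'.
Proof.
move=> [HB sB pB fB [H iH bH]] l1 l2; split => //.
  by move=> u; apply: le_trans (fB u) _; rewrite ler_wpM2r // sqr_ge0.
by exists H => // w; apply: le_trans (bH w) _; rewrite ler_wpM2r.
Qed.

Definition stepf (acc : nat -> bool) (sj yj : nat -> X) :=
  fun B j => if acc j then lbfgs_update ip B (sj j) (yj j) else B.

Lemma fold_weak (acc : nat -> bool) (sj yj : nat -> X) B0 (js : seq nat) :
  (forall j, acc j -> 0 < ip (yj j) (sj j)) -> weak B0 ->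
  weak (foldl (stepf acc sj yj) B0 js).
Proof.
move=> hacc; elim: js B0 => [|j js IH] B0 //= [HB sB pB]; apply: IH.
rewrite /stepf; case: ifP => // aj; split.
- exact: upd_linear.
- exact: upd_symm.
- by apply: upd_psd => //; apply: hacc.
Qed.

Lemma fold_strong (acc : nat -> bool) (sj yj : nat -> X) (L cs : R) (B0 : X -> X) (js : seq nat) (Lam h : R) :
  0 < cs -> 0 <= L -> 0 <= h ->
  (forall j, j \in js -> acc j ->
     cs * `|sj j| ^+ 2 < ip (yj j) (sj j) /\ `|yj j| <= L * `|sj j|) ->
  inv_ok B0 Lam h ->
  inv_ok (foldl (stepf acc sj yj) B0 js)
    (Lam + (size js)%:R * (L ^+ 2 / cs))
    (((1 + L / cs) ^+ 2) ^+ (size js) * (h + (size js)%:R * cs^-1)).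
Proof.
move=> cs0 L0; elim: js B0 Lam h => [|j js IH] B0 Lam h h0 hacc hB0 /=.
  by rewrite !mul0r !addr0 expr0 mul1r.
set A := (1 + L / cs) ^+ 2.
have hj : j \in j :: js by rewrite mem_head.
have L2 : 0 <= L ^+ 2 / cs by rewrite divr_ge0 ?sqr_ge0 // ltW.
have A1 : 1 <= A.
  by apply: exprn_ege1; rewrite lerDl divr_ge0 // ltW.
have ci : 0 <= cs^-1 by rewrite invr_ge0 ltW.
have step : inv_ok (stepf acc sj yj B0 j) (Lam + L ^+ 2 / cs) (A * h + cs^-1).
  rewrite /stepf; case: ifP => aj.
    have [hb hy] := hacc j hj aj.
    case: hB0 => HB sB pB fB [H iH bH].
    have b0 : 0 < ip (yj j) (sj j).
      by apply: le_lt_trans hb; rewrite mulr_ge0 ?sqr_ge0 // ltW.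
    split.
    - exact: upd_linear.
    - exact: upd_symm.
    - exact: upd_psd.
    - exact: upd_form.
    - exists (upd_inv ip H (sj j) (yj j)); first exact: upd_inverse.
      by move=> w; rewrite (mulrC A h); apply: (upd_inv_bound Hip bH).
  refine (inv_ok_mono hB0 _ _).
  - by rewrite lerDl.
  - apply: (le_trans (_ : h <= A * h)); [by rewrite ler_peMl | by rewrite lerDl].
have h0' : 0 <= A * h + cs^-1 by rewrite addr_ge0 // mulr_ge0 // (le_trans ler01).
have hacc' : forall j', j' \in js -> acc j' ->
    cs * `|sj j'| ^+ 2 < ip (yj j') (sj j') /\ `|yj j'| <= L * `|sj j'|.
  by move=> j' hj'; apply: hacc; rewrite in_cons hj' orbT.
have := IH _ _ _ h0' hacc' step.
move=> H1; refine (inv_ok_mono H1 _ _).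
  by rewrite mulrSr; lra.
rewrite [A ^+ (size js).+1]exprSr mulrSr.
set An := A ^+ size js; set n := (size js)%:R.
have An1 : 1 <= An by apply: exprn_ege1.
have n0 : 0 <= n by [].
have hpos : 0 <= An * ((n + 1) * cs^-1) * (A - 1).
  by rewrite !mulr_ge0 // ?subr_ge0 // ?addr_ge0 // (le_trans ler01).
have e1 : An * (A * h + cs^-1 + n / cs) = An * A * h + An * cs^-1 + An * (n * cs^-1).
  by ring.
have e2 : An * A * (h + (n + 1) / cs) = An * A * h + An * ((n + 1) * cs^-1) * A.
  by ring.
have e3 : An * ((n + 1) * cs^-1) = An * cs^-1 + An * (n * cs^-1) by ring.
rewrite e1 e2; nra.
Qed.

End Fold.

Section Neu.
Variables (R : realType) (X : completeNormedModType R) (ip : X -> X -> R).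
Hypothesis Hip : is_inner_product ip.

Lemma lin_sum (A : X -> X) (f : nat -> X) n : is_linear_op A ->
  A (\sum_(0 <= k < n) f k) = \sum_(0 <= k < n) A (f k).
Proof.
move=> HA; elim: n => [|n IH]; first by rewrite !big_nil lin0.
by rewrite !big_nat_recr //= linD // IH.
Qed.

Lemma small_eq0 (e : X) : (forall eps : R, 0 < eps -> `|e| <= eps) -> e = 0.
Proof.
move=> h; apply/eqP; rewrite -normr_le0.
have [e0|e0] := leP `|e| 0 => //.
have := h (`|e| / 2); rewrite divr_gt0 // => /(_ isT); lra.
Qed.

Lemma fixpoint_exists (A : X -> X) (q : R) (v0 : X) : is_linear_op A ->
  0 <= q -> q < 1 -> (forall u, `|A u| <= q * `|u|) ->
  exists w, w = v0 + A w.
Proof.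
move=> HA q0 q1 hA.
pose u n := iter n A v0.
have hu n : `|u n| <= `|v0| * q ^+ n.
  elim: n => [|n IH]; first by rewrite expr0 mulr1.
  rewrite /u iterS -/(u n); apply: le_trans (hA _) _.
  by rewrite exprSr mulrA (mulrC q); apply: ler_wpM2r.
have cvN : cvgn [normed series u].
  apply: (@series_le_cvg _ _ (geometric `|v0| q)).
  - by move=> n; rewrite normr_ge0.
  - by move=> n; rewrite /geometric /= mulr_ge0 // exprn_ge0.
  - exact: hu.
  - by apply: is_cvg_geometric_series; rewrite ger0_norm.
have cv := normed_cvg cvN.
set w := limn (series u) in cv.
exists w.
have key n : series u n.+1 = v0 + A (series u n).
  rewrite (_ : series u n.+1 = \sum_(0 <= k < n.+1) u k) // (_ : series u n = \sum_(0 <= k < n) u k) //.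
  rewrite big_nat_recl // lin_sum //.
apply/eqP; rewrite -subr_eq0; apply/eqP; apply: small_eq0 => eps eps0.
have e2 : 0 < eps / 2 by rewrite divr_gt0.
have [N _ hN] := cvgr_dist_lt _ _ cv _ e2.
have h1 := hN N (leqnn N); have h2 := hN N.+1 (leqnSn N).
rewrite /= key in h2.
have -> : w - (v0 + A w) = (w - (v0 + A (series u N))) + A (series u N - w).
  by rewrite linB // !opprD !addrA addrNK.
apply: le_trans (ler_normD _ _) _.
apply: le_trans (lerD (ltW h2) (hA _)) _.
rewrite distrC.
have : q * `|w - series u N| <= eps / 2.
  apply: le_trans (_ : 1 * `|w - series u N| <= _); first by rewrite ler_wpM2r // ltW.
  by rewrite mul1r ltW.
lra.
Qed.

Lemma coercive_inverse (T : X -> X) (c Lam : R) : is_linear_op T -> symm ip T ->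
  0 < c -> (forall u, c * `|u| ^+ 2 <= ip u (T u)) ->
  (forall u, ip u (T u) <= Lam * `|u| ^+ 2) ->
  exists H, is_inverse T H.
Proof.
move=> HT sT c0 hc hL.
set M := `|Lam| + c.
have M0 : 0 < M by rewrite ltr_wpDl.
have cM : c <= M by rewrite lerDr.
have LM : Lam <= M by rewrite (le_trans (ler_norm _)) // lerDl ltW.
pose A u := u - M^-1 *: T u.
have HA : is_linear_op A.
  move=> a u v; apply: (ip_ext Hip) => t; rewrite /A HT.
  rewrite !(ipDl Hip, ipZl Hip, ipNl Hip, ipBl Hip).
  by ring.
have sA : symm ip A.
  move=> u v; rewrite /A (ipBl Hip) (ipBr Hip) (ipZl Hip) (ipZr Hip) sT.
  by [].
have eA u : ip u (A u) = `|u| ^+ 2 - M^-1 * ip u (T u).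
  by rewrite /A (ipBr Hip) (ipZr Hip) (ipvv Hip).
have Mi0 : 0 < M^-1 by rewrite invr_gt0.
have pA : psd ip A.
  move=> u; rewrite eA subr_ge0.
  apply: le_trans (_ : M^-1 * (Lam * `|u| ^+ 2) <= _).
    by apply: ler_wpM2l; [exact: ltW | exact: hL].
  rewrite mulrA -[X in _ <= X]mul1r; apply: ler_wpM2r; first exact: sqr_ge0.
  by rewrite mulrC ler_pdivrMr // mul1r.
set q := 1 - c / M.
have q0 : 0 <= q by rewrite subr_ge0 ler_pdivrMr // mul1r.
have q1 : q < 1 by rewrite ltrBlDr ltrDl divr_gt0.
have fA u : ip u (A u) <= q * `|u| ^+ 2.
  rewrite eA /q mulrBl mul1r lerD2l lerN2 mulrAC mulrC.
  by apply: ler_wpM2l; [exact: ltW | exact: hc].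
have nA := norm_form Hip HA sA pA fA.
have := fun v => fixpoint_exists (M^-1 *: v) HA q0 q1 nA.
case/choice => H hH.
have TH v : T (H v) = v.
  apply: (ip_ext Hip) => t.
  have := congr1 (fun z => ip z t) (hH v); rewrite /A /=.
  rewrite !(ipDl Hip, ipZl Hip, ipNl Hip, ipBl Hip) => e.
  have : M^-1 * (ip v t - ip (T (H v)) t) = 0 by lra.
  by move/eqP; rewrite mulf_eq0 gt_eqF //= subr_eq0 => /eqP ->.
exists H; split => // u.
apply: (coercive_inj Hip HT c0 hc); exact: TH.
Qed.

End Neu.

Section FTC.
Variables (R : realType) (X : completeNormedModType R) (ip : X -> X -> R).
Hypothesis Hip : is_inner_product ip.
Variable g : X -> X.
Hypothesis C2g : C2 g.
Variable u : X.

Definition ipf : X -> R^o := fun v => ip u v.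
Lemma ipf_lin : linear ipf.
Proof. by move=> a v w; rewrite /ipf (ipDr Hip) (ipZr Hip). Qed.
HB.instance Definition _ := GRing.isLinear.Build R X R^o _ ipf ipf_lin.

Lemma ipf_cont : continuous ipf.
Proof.
apply/bounded_linear_continuous/bounded_funP => r.
exists (`|u| * r) => v hv; apply: le_trans (ip_CS Hip _ _) _.
by rewrite ler_wpM2l.
Qed.

Lemma dg_lin (w : X) : is_linear_op ('d g w).
Proof. by move=> a v1 v2; rewrite linearP. Qed.

Lemma integrand_cont (p s v : X) :
  continuous (fun t : R => ip u ('d g (p + t *: s) v)).
Proof.
move=> t0; apply/cvgrPdist_lt => e e0.
set e' := e / ((`|u| * `|v|) + 1).
have e'0 : 0 < e' by rewrite divr_gt0 // ltr_wpDl // mulr_ge0.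
have [r r0 hr] := C2g.2 (p + t0 *: s) e' e'0.
have rs0 : 0 < r / (`|s| + 1) by rewrite divr_gt0 // ltr_wpDl.
near=> t.
have ht : `|t0 - t| < r / (`|s| + 1).
  by near: t; apply: cvgr_dist_lt.
set w0 := p + t0 *: s; set w := p + t *: s.
have hw : `|w - w0| < r.
  rewrite /w /w0 opprD addrACA subrr add0r -scalerBl normrZ distrC.
  apply: le_lt_trans (_ : `|t0 - t| * (`|s| + 1) < r).
    by rewrite ler_wpM2l // lerDl.
  by rewrite -ltr_pdivlMr // ltr_wpDl.
have hop := hr w hw.
have lin : is_linear_op (fun v => 'd g w v - 'd g w0 v).
  move=> a v1 v2; rewrite !linearP /= scalerBr; rewrite addrACA.
  by rewrite scalerN.
have hb := opnorm_bnd lin hop v.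
rewrite /= -(ipBr Hip) -opprB (ipNr Hip) normrN.
apply: le_lt_trans (ip_CS Hip _ _) _.
apply: le_lt_trans (_ : `|u| * (e' * `|v|) < e).
  by rewrite ler_wpM2l.
have K0 : 0 <= `|u| * `|v| by rewrite mulr_ge0.
have -> : `|u| * (e' * `|v|) = e * ((`|u| * `|v|) / (`|u| * `|v| + 1)).
  by rewrite /e'; ring.
rewrite gtr_pMr // ltr_pdivrMr ?ltr_wpDl // mul1r ltrDl //.
Unshelve. all: by end_near.
Qed.

Lemma dF_at (p s : X) (t : R) :
  differentiable (fun r : R => ipf (g (p + r *: s))) t /\
  'd (fun r : R => ipf (g (p + r *: s))) t 1 = ip u ('d g (p + t *: s) s).
Proof.
pose h := fun r : R => p + r *: s.
have dh : differentiable h t by rewrite /h.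
have dhE : 'd h t = (fun r : R => r *: s) :> (R -> X).
  by rewrite /h diff_val // add0r.
have dG : differentiable (g \o h) t by apply: differentiable_comp => //; apply: C2g.1.
have dI : forall w, differentiable ipf w.
  by move=> w; apply: linear_differentiable; exact: ipf_cont.
have eF : (fun r : R => ipf (g (p + r *: s))) = ipf \o (g \o h) by [].
rewrite eF; split; first by apply: differentiable_comp.
rewrite diff_comp // diff_lin; last exact: ipf_cont.
rewrite /= diff_comp //; last by apply: C2g.1.
by rewrite /= dhE scale1r.
Qed.

Lemma ftc_ip (p s : X) :
  Rintegral lebesgue_measure `[0%R, 1%R] (fun t => ip u ('d g (p + t *: s) s))
  = ip u (g (p + s)) - ip u (g p).
Proof.
rewrite /Rintegral (@continuous_FTC2 _ _ (fun r : R => ipf (g (p + r *: s)))).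
- by rewrite -EFinD /= /ipf scale1r scale0r addr0.
- by [].
- by apply: continuous_subspaceT; apply: integrand_cont.
- split.
  + move=> r _; apply/derivable1_diffP; exact: (dF_at p s r).1.
  + apply: cvg_at_right_filter.
    exact: (differentiable_continuous (dF_at p s 0).1).
  + apply: cvg_at_left_filter.
    exact: (differentiable_continuous (dF_at p s 1).1).
- move=> r _; rewrite derive1E deriveE; last exact: (dF_at p s r).1.
  exact: (dF_at p s r).2.
Qed.

End FTC.

Section Gbar.
Variables (R : realType) (X : completeNormedModType R) (ip : X -> X -> R).
Hypothesis Hip : is_inner_product ip.
Variable g : X -> X.
Hypothesis C2g : C2 g.

Lemma int_lin (p s v : X) (a : R) (u1 u2 : X) :
  Rintegral lebesgue_measure `[0%R, 1%R]
    (fun t => ip (a *: u1 + u2) ('d g (p + t *: s) v)) =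
  a * Rintegral lebesgue_measure `[0%R, 1%R] (fun t => ip u1 ('d g (p + t *: s) v))
  + Rintegral lebesgue_measure `[0%R, 1%R] (fun t => ip u2 ('d g (p + t *: s) v)).
Proof.
have hi w : lebesgue_measure.-integrable `[0%R, 1%R]
    (EFin \o (fun t => ip w ('d g (p + t *: s) v))).
  apply: continuous_compact_integrable; first exact: segment_compact.
  apply: continuous_subspaceT; exact: (integrand_cont Hip C2g).
under eq_Rintegral do rewrite (ipDZl Hip).
rewrite RintegralD //.
- by rewrite RintegralZl.
- have -> : (fun t => a * ip u1 ('d g (p + t *: s) v)) =
            (fun t => ip (a *: u1) ('d g (p + t *: s) v)).
    by apply: funext => t; rewrite (ipZl Hip).
  exact: hi.
Qed.

Lemma gbar_tauz (x : nat -> X) (S : nat -> X -> X) k (MG : R) :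
  (forall u v, Gbar_form ip g x S k u v = Gbar_form ip g x S k v u /\
     0 <= Gbar_form ip g x S k u u) ->
  (forall u v, `|Gbar_form ip g x S k u v| <= MG * `|u| * `|v|) ->
  0 < ip (y_ g x k - S k.+1 (s_ x k)) (s_ x k) ->
  `|y_ g x k - S k.+1 (s_ x k)| ^+ 2 / ip (y_ g x k - S k.+1 (s_ x k)) (s_ x k)
    <= MG.
Proof.
move=> hG hM.
set s := s_ x k; set z := y_ g x k - S k.+1 s => rho0.
set G := Gbar_form ip g x S k.
have hGs u : G u s = ip u z.
  rewrite /G /Gbar_form ftc_ip //.
  have -> : x k + s_ x k = x k.+1 by rewrite /s_ addrC subrK.
  by rewrite /z /y_ (ipBr Hip) (ipBr Hip).
have hlin a u1 u2 w : G (a *: u1 + u2) w = a * G u1 w + G u2 w.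
  rewrite /G /Gbar_form int_lin.
  rewrite (ipDZl Hip); ring.
have hCS := form_CS hlin (fun u v => (hG u v).1) (fun u => (hG u u).2) z s.
rewrite hGs (ipvv Hip) (hGs s) (ipC Hip s z) in hCS.
have hzz : G z z <= MG * `|z| * `|z| by apply: le_trans (ler_norm _) (hM _ _).
have z0 : z != 0.
  by apply/eqP => z0; move: rho0; rewrite z0 (ip0l Hip) ltxx.
have nz : 0 < `|z| ^+ 2 by rewrite exprn_gt0 // normr_gt0.
rewrite ler_pdivrMr //.
have h1 : (`|z| ^+ 2) * (`|z| ^+ 2) <= (MG * ip z s) * (`|z| ^+ 2).
  rewrite -expr2; apply: le_trans hCS _.
  apply: le_trans (ler_wpM2r (ltW rho0) hzz) _.
  by rewrite le_eqVlt; apply/orP; left; apply/eqP; ring.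
by rewrite ler_pM2r // in h1.
Qed.

End Gbar.

Lemma Pproj_ge (R : realType) (wl : R) (wu : \bar R) t :
  (wl%:E <= wu)%E -> (wl%:E <= Pproj wl wu t)%E.
Proof. by move=> h; rewrite /Pproj le_min h andbT lee_fin le_max lexx orbT. Qed.

Lemma Pproj_le1 (R : realType) (wl : R) (wu : \bar R) t :
  (Pproj wl wu t <= wu)%E.
Proof. by rewrite /Pproj ge_min lexx orbT. Qed.

Lemma Pproj_le2 (R : realType) (wl : R) (wu : \bar R) t :
  (Pproj wl wu t <= (Num.max t wl)%:E)%E.
Proof. by rewrite /Pproj ge_min lexx. Qed.

Section Main.
Variables (R : realType) (X : completeNormedModType R)
  (ip : X -> X -> R) (J : X -> R) (g : X -> X)
  (x0 : X) (eps : R) (l : nat) (c0 : R) (C0 : \bar R) (cs c1 c2 : R)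
  (use_g : bool) (sigma L : R)
  (x d : nat -> X) (Sop : nat -> X -> X) (tau : nat -> R) (m MG M5 : R).
Hypotheses (Hip : is_inner_product ip) (eps0 : 0 <= eps) (c00 : 0 <= c0)
  (cC0 : (c0%:E <= C0)%E) (cs0 : 0 < cs) (c10 : 0 < c1) (c20 : 0 < c2)
  (tau0 : 0 < tau 0) (x00 : x 0%N = x0).
Notation run k := (running g x eps k).
Hypotheses
  (HS : forall k, run k -> sym_psd_bounded ip (Sop k))
  (HBd : forall k, run k -> Bk ip g x cs l Sop tau k (d k) = - g (x k))
  (Htau : forall k, run k.+1 -> tau_rule ip g x c0 C0 c1 c2 use_g Sop tau k)
  (L0 : 0 < L)
  (HL : forall u v, Omega J x0 u -> Omega J x0 v -> `|g u - g v| <= L * `|u - v|)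
  (m0 : 0 <= m) (HM : forall k, run k -> (opnorm (Sop k) <= m%:E)%E)
  (Hls : forall k, run k -> exists a, [/\ x k.+1 = x k + a *: d k, 0 <= a * sigma &
        J (x k + a *: d k) <= J (x k) + a * sigma * ip (g (x k)) (d k)])
  (HM5 : c0 = 0 -> forall k, run k ->
     exists2 B0inv : X -> X, is_inverse (B0_ Sop tau k) B0inv &
       (opnorm B0inv <= M5%:E)%E)
  (HMG : forall k, run k.+1 -> C0 = +oo%E -> ~~ use_g ->
     0 < ip (y_ g x k - Sop k.+1 (s_ x k)) (s_ x k) ->
     `|y_ g x k - Sop k.+1 (s_ x k)| ^+ 2 /
       ip (y_ g x k - Sop k.+1 (s_ x k)) (s_ x k) <= MG).

Lemma runS k : run k.+1 -> run k.
Proof. by move=> h j hj; apply: h; rewrite ltnS ltnW. Qed.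

Lemma runle k j : run k -> (j <= k)%N -> run j.
Proof. by move=> h hjk i hi; apply: h; apply: leq_trans hi hjk. Qed.


Lemma Sfacts k : run k -> [/\ is_linear_op (Sop k), symm ip (Sop k),
  psd ip (Sop k) & forall u, `|Sop k u| <= m * `|u|].
Proof.
move=> h; case: (HS h) => lin sym ps op; split => // u.
exact: (opnorm_bnd lin (HM h) u).
Qed.

Lemma tau_facts k : run k.+1 ->
  let gn := `|g (x k.+1)| in
  let gam := c1 * gn `^ c2 in
  let zk := y_ g x k - Sop k.+1 (s_ x k) in
  let rho := ip zk (s_ x k) in
  [/\ 0 < gn, Num.min c0 gam <= tau k.+1,
      ((tau k.+1)%:E <= Order.max C0 (gam^-1)%:E)%E &
      if (0 < rho) && ~~ use_g then
        tau k.+1 <= Num.max (`|zk| ^+ 2 / rho) (Num.min c0 gam)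
      else tau k.+1 <= Num.max (`|zk| / `|s_ x k|) (Num.min c0 gam)].
Proof.
move=> h gn gam zk rho.
have gn0 : 0 < gn by apply: le_lt_trans eps0 (h k (ltnSn k)).
have hwl : ((Num.min c0 gam)%:E <= Order.max C0 (gam^-1)%:E)%E.
  apply: le_trans (_ : c0%:E <= _)%E.
    by rewrite lee_fin ge_min lexx.
  by rewrite le_max cC0.
have := Htau h; rewrite /tau_rule -/gn -/gam -/zk -/rho.
case: ifP => _ /andP[h1 h2]; split => //.
- by rewrite -lee_fin (le_trans (Pproj_ge _ hwl) h1).
- exact: (le_trans h2 (Pproj_le1 _ _ _)).
- by rewrite -lee_fin (le_trans h2 (Pproj_le2 _ _ _)).
- by rewrite -lee_fin (le_trans (Pproj_ge _ hwl) h1).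
- exact: (le_trans h2 (Pproj_le1 _ _ _)).
- by rewrite -lee_fin (le_trans h2 (Pproj_le2 _ _ _)).
Qed.


Lemma gam_pos k : run k.+1 -> 0 < c1 * `|g (x k.+1)| `^ c2.
Proof.
move=> h; apply: mulr_gt0 => //; apply: powR_gt0.
by apply: le_lt_trans eps0 (h k (ltnSn k)).
Qed.

Lemma tau_ge0 k : run k -> 0 <= tau k.
Proof.
case: k => [_|k h]; first exact: ltW.
have [_ hl _ _] := tau_facts h.
apply: le_trans hl; rewrite le_min c00 /=; exact: ltW (gam_pos h).
Qed.

Lemma B0_weak k : run k -> weak ip (B0_ Sop tau k).
Proof.
move=> h; have [lin sym ps _] := Sfacts h; split.
- move=> a u v; apply: (ip_ext Hip) => t; rewrite /B0_ lin.
  rewrite !(ipDl Hip, ipZl Hip); ring.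
- move=> u v; rewrite /B0_ (ipDl Hip) (ipDr Hip) (ipZl Hip) (ipZr Hip) sym.
  by [].
- move=> u; rewrite /B0_ (ipDr Hip) (ipZr Hip) (ipvv Hip).
  by rewrite addr_ge0 // mulr_ge0 ?sqr_ge0 // tau_ge0.
Qed.

Lemma B0_form k : run k -> forall u,
  ip u (B0_ Sop tau k u) <= (tau k + m) * `|u| ^+ 2.
Proof.
move=> h u; have [lin sym ps hb] := Sfacts h.
rewrite /B0_ (ipDr Hip) (ipZr Hip) (ipvv Hip) mulrDl lerD2l.
apply: le_trans (ler_norm _) _; apply: le_trans (ip_CS Hip _ _) _.
by rewrite expr2 mulrA (mulrC m) -mulrA ler_wpM2l.
Qed.

Lemma B0_coerc k : run k -> forall u,
  tau k * `|u| ^+ 2 <= ip u (B0_ Sop tau k u).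
Proof.
move=> h u; have [lin sym ps hb] := Sfacts h.
by rewrite /B0_ (ipDr Hip) (ipZr Hip) (ipvv Hip) lerDl.
Qed.

Lemma Bk_fold k : Bk ip g x cs l Sop tau k =
  foldl (stepf ip (accepted ip g x cs) (s_ x) (y_ g x)) (B0_ Sop tau k)
    (iota (k - l) (k - (k - l))).
Proof. by []. Qed.

Lemma Bk_weak k : run k -> weak ip (Bk ip g x cs l Sop tau k).
Proof.
move=> h; rewrite Bk_fold; apply: (fold_weak Hip); last exact: B0_weak.
move=> j; rewrite /accepted => hj; apply: le_lt_trans hj.
by rewrite mulr_ge0 ?sqr_ge0 // ltW.
Qed.

Lemma descent k : run k -> J (x k.+1) <= J (x k).
Proof.
move=> h; have [a [ex hpos harm]] := Hls h.
rewrite ex; apply: le_trans harm _; rewrite gerDl.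
apply: mulr_ge0_le0 => //.
have [_ _ ps] := Bk_weak h.
have e : g (x k) = - Bk ip g x cs l Sop tau k (d k) by rewrite HBd // opprK.
by rewrite e (ipNl Hip) oppr_le0 (ipC Hip).
Qed.

Lemma omega k : run k -> forall j, (j <= k)%N -> Omega J x0 (x j).
Proof.
move=> h; elim => [|j IH] hj; first by rewrite /Omega /= x00.
rewrite /Omega /=; apply: le_trans (IH (ltnW hj)).
exact: descent (runle h (ltnW hj)).
Qed.

Lemma lip k j : run k -> (j < k)%N -> `|y_ g x j| <= L * `|s_ x j|.
Proof.
move=> h hj; rewrite /y_ /s_; apply: HL.
- exact: omega h _ hj.
- exact: omega h _ (ltnW hj).
Qed.


Definition Pk k := Num.max 1 (`|g (x k)| `^ (- c2)).
Lemma Pk1 k : 1 <= Pk k. Proof. by rewrite /Pk le_max lexx. Qed.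

Lemma gam_inv k : run k.+1 ->
  (c1 * `|g (x k.+1)| `^ c2)^-1 <= c1^-1 * Pk k.+1.
Proof.
move=> h; rewrite invfM -powRN; apply: ler_wpM2l; first by rewrite invr_ge0 ltW.
by rewrite /Pk le_max lexx orbT.
Qed.

Definition T1 := tau 0 + `|fine C0| + c1^-1 + L + m + c0 + `|MG|.

Lemma T1ge : [/\ tau 0 <= T1, `|fine C0| + c1^-1 <= T1, L + m + c0 <= T1
  & `|MG| + c0 <= T1].
Proof.
have h1 : 0 <= c1^-1 by rewrite invr_ge0 ltW.
have h2 : 0 <= `|fine C0| by [].
have h3 : 0 <= `|MG| by [].
have h4 := ltW tau0; have h5 := ltW L0; have h6 := m0; have h7 := c00.
rewrite /T1; split; lra.
Qed.

Lemma tau_upper k : run k -> tau k <= T1 * Pk k.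
Proof.
have [t1 t2 t3 t4] := T1ge.
have T10 : 0 <= T1 by apply: le_trans t1; exact: ltW.
case: k => [_|k h].
  by apply: le_trans t1 _; rewrite -[X in X <= _]mulr1 ler_wpM2l // Pk1.
have P1 := Pk1 k.+1.
have [gn0 hl hu hb] := tau_facts h.
have hT : forall a, a <= T1 -> a <= T1 * Pk k.+1.
  by move=> a aT; apply: le_trans aT _; rewrite -[X in X <= _]mulr1 ler_wpM2l.
have wlc : Num.min c0 (c1 * `|g (x k.+1)| `^ c2) <= c0 by rewrite ge_min lexx.
have hwl : Num.min c0 (c1 * `|g (x k.+1)| `^ c2) <= T1 * Pk k.+1.
  apply: hT; apply: le_trans wlc _; apply: le_trans t3.
  by rewrite lerDr addr_ge0 // ltW.
case hC : C0 => [r| |]; last by move: cC0; rewrite hC.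
- rewrite hC -EFin_max lee_fin in hu; apply: le_trans hu _.
  rewrite hC /= in t2.
  rewrite ge_max; apply/andP; split.
    apply: le_trans (ler_norm r) _; apply: hT.
    by apply: le_trans t2; rewrite lerDl invr_ge0 ltW.
  apply: le_trans (gam_inv h) _.
  apply: le_trans (_ : (`|r| + c1^-1) * Pk k.+1 <= _); last first.
    by apply: ler_wpM2r; [exact: le_trans ler01 P1 | exact: t2].
  by rewrite mulrDl lerDr mulr_ge0 // (le_trans ler01 P1).
- move: hb; case: ifP => [/andP[rho0 nug] hb|_ hb]; apply: le_trans hb _;
    rewrite ge_max hwl andbT; apply: hT.
  + apply: le_trans (HMG h hC nug rho0) _.
    by apply: le_trans (ler_norm _) _; apply: le_trans t4; rewrite lerDl.
  + apply: le_trans t3; apply: le_trans (_ : L + m <= _); last by rewrite lerDl.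
    have [sl _ _ sb] := Sfacts h.
    have hy := lip h (ltnSn k).
    have [s0|s0] := eqVneq (s_ x k) 0.
      by rewrite s0 normr0 invr0 mulr0 addr_ge0 // ltW.
    rewrite ler_pdivrMr ?normr_gt0 // mulrDl.
    apply: le_trans (ler_normB _ _) _; exact: lerD hy (sb _).
Qed.


Definition T2 := (tau 0)^-1 + c0^-1 + c1^-1 + Num.max M5 0.

Lemma T2ge : [/\ (tau 0)^-1 <= T2, c0^-1 + c1^-1 <= T2 & M5 <= T2].
Proof.
have h1 : 0 <= c1^-1 by rewrite invr_ge0 ltW.
have h2 : 0 <= c0^-1 by rewrite invr_ge0.
have h3 : 0 <= (tau 0)^-1 by rewrite invr_ge0 ltW.
have h4 : 0 <= Num.max M5 0 by rewrite le_max lexx orbT.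
have h5 : M5 <= Num.max M5 0 by rewrite le_max lexx.
rewrite /T2; split; lra.
Qed.

Lemma B0_inv k : run k -> exists2 H, is_inverse (B0_ Sop tau k) H &
  forall w, `|H w| <= (T2 * Pk k) * `|w|.
Proof.
move=> h.
have [t1 t2 t3] := T2ge.
have P1 := Pk1 k.
have T20 : 0 <= T2 by apply: le_trans t1; rewrite invr_ge0 ltW.
have hT : forall a, a <= T2 -> a <= T2 * Pk k.
  by move=> a aT; apply: le_trans aT _; rewrite -[X in X <= _]mulr1 ler_wpM2l.
have pos_case : 0 < tau k -> exists2 H, is_inverse (B0_ Sop tau k) H &
    forall w, `|H w| <= (tau k)^-1 * `|w|.
  move=> tp; have [lin sym _] := B0_weak h.
  have [H iH] := coercive_inverse Hip lin sym tp (B0_coerc h) (B0_form h).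
  exists H => //; exact: (coercive_right_inv_bound Hip tp (B0_coerc h) iH.1).
have fin : forall (H : X -> X) a, is_inverse (B0_ Sop tau k) H ->
    (forall w, `|H w| <= a * `|w|) -> a <= T2 * Pk k ->
    exists2 H, is_inverse (B0_ Sop tau k) H &
      forall w, `|H w| <= (T2 * Pk k) * `|w|.
  by move=> H a iH bH aT; exists H => // w; apply: le_trans (bH w) _;
    rewrite ler_wpM2r.
case: k h P1 hT fin pos_case => [|k] h P1 hT fin pos_case.
  have [H iH bH] := pos_case tau0.
  exact: fin iH bH (hT _ t1).
have [eq0|ne0] := eqVneq c0 0.
  have [H iH op] := HM5 eq0 h.
  have lin : is_linear_op H by apply: (inv_linear (T:=B0_ Sop tau k.+1)) => //;
    have [] := B0_weak h.
  exact: fin iH (opnorm_bnd lin op) (hT _ t3).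
have c0p : 0 < c0 by rewrite lt_def ne0 c00.
have gp := gam_pos h.
have [gn0 hl _ _] := tau_facts h.
set gam := c1 * `|g (x k.+1)| `^ c2 in gp hl.
have wp : 0 < Num.min c0 gam by rewrite lt_min c0p gp.
have tp : 0 < tau k.+1 by apply: lt_le_trans hl.
have [H iH bH] := pos_case tp.
apply: fin iH bH _.
apply: le_trans (_ : (Num.min c0 gam)^-1 <= _).
  by rewrite lef_pV2 ?posrE.
apply: le_trans (_ : c0^-1 + c1^-1 * Pk k.+1 <= _).
  rewrite minEle; case: ifP => _.
    rewrite lerDl; apply: mulr_ge0; last exact: le_trans ler01 P1.
    by rewrite invr_ge0 ltW.
  by apply: le_trans (gam_inv h) _; rewrite lerDr invr_ge0 ltW.
apply: le_trans (_ : (c0^-1 + c1^-1) * Pk k.+1 <= _); last first.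
  by apply: ler_wpM2r => //; exact: le_trans ler01 P1.
rewrite mulrDl lerD2r -[X in X <= _]mulr1; apply: ler_wpM2l => //.
by rewrite invr_ge0 ltW.
Qed.


Lemma final : exists2 C : R, 0 < C & forall k, run k ->
  exists2 Binv : X -> X, is_inverse (Bk ip g x cs l Sop tau k) Binv &
    (opnorm (Bk ip g x cs l Sop tau k) + opnorm Binv
       <= (C * Num.max 1 (`|g (x k)| `^ (- c2)))%:E)%E.
Proof.
set E := L ^+ 2 / cs; set A := (1 + L / cs) ^+ 2; set D := cs^-1.
have E0 : 0 <= E by rewrite divr_ge0 ?sqr_ge0 // ltW.
have D0 : 0 <= D by rewrite invr_ge0 ltW.
have A1 : 1 <= A by apply: exprn_ege1; rewrite lerDl divr_ge0 // ltW.
have Al1 : 1 <= A ^+ l by apply: exprn_ege1.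
have [t1 _ _ _] := T1ge; have [t1' _ _] := T2ge.
have T10 : 0 <= T1 by apply: le_trans t1; exact: ltW.
have T20 : 0 <= T2 by apply: le_trans t1'; rewrite invr_ge0 ltW.
have lD0 : 0 <= l%:R * D by rewrite mulr_ge0.
have lE0 : 0 <= l%:R * E by rewrite mulr_ge0.
have AT0 : 0 <= A ^+ l * (T2 + l%:R * D).
  by apply: mulr_ge0; [apply: le_trans Al1 | apply: addr_ge0].
exists (T1 + m + l%:R * E + A ^+ l * (T2 + l%:R * D) + 1).
  by have := m0; lra.
move=> k h; rewrite -/(Pk k).
have P1 := Pk1 k; have P0 : 0 <= Pk k by apply: le_trans P1.
set n := (k - (k - l))%N.
have nl : (n <= l)%N by rewrite /n -minnE geq_minr.
have hacc : forall j, j \in iota (k - l) n -> accepted ip g x cs j ->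
    cs * `|s_ x j| ^+ 2 < ip (y_ g x j) (s_ x j) /\ `|y_ g x j| <= L * `|s_ x j|.
  move=> j; rewrite mem_iota => /andP[_ hj] acc; split => //.
  apply: lip h _; move: hj; rewrite /n subnKC //; exact: leq_subr.
have [B0lin B0sym B0psd] := B0_weak h.
have [H0 iH0 bH0] := B0_inv h.
have hB0 : inv_ok ip (B0_ Sop tau k) (tau k + m) (T2 * Pk k).
  split => //; first exact: B0_form.
  by exists H0.
have h0 : 0 <= T2 * Pk k by rewrite mulr_ge0.
have := fold_strong Hip cs0 (ltW L0) h0 hacc hB0.
rewrite -Bk_fold size_iota -/n -/E -/A -/D.
case=> lin sym ps form [H iH bH].
exists H => //.
have tk0 := tau_ge0 h.
have Lamn0 : 0 <= tau k + m + n%:R * E by rewrite !addr_ge0 // mulr_ge0.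
have An0 : 0 <= A ^+ n by rewrite exprn_ge0 // (le_trans ler01).
have opB := opnorm_le Lamn0 (norm_form Hip lin sym ps form).
have hn0 : 0 <= A ^+ n * (T2 * Pk k + n%:R * D) by rewrite mulr_ge0 ?addr_ge0 // mulr_ge0.
have opH := opnorm_le hn0 bH.
apply: le_trans (leeD opB opH) _; rewrite -EFinD lee_fin.
have nlR : n%:R <= l%:R :> R by rewrite ler_nat.
have e0 : n%:R * E <= l%:R * E by rewrite ler_wpM2r.
have eA : A ^+ n <= A ^+ l by apply: ler_weXn2l.
have e1 : A ^+ n * (T2 * Pk k + n%:R * D) <= A ^+ l * (T2 * Pk k + l%:R * D).
  apply: ler_pM => //; first by rewrite addr_ge0 // mulr_ge0.
  by rewrite lerD2l ler_wpM2r.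
have e2 : A ^+ l * (T2 * Pk k + l%:R * D) <= A ^+ l * (T2 + l%:R * D) * Pk k.
  rewrite -mulrA; apply: ler_wpM2l; first by apply: le_trans Al1.
  have : l%:R * D <= l%:R * D * Pk k.
    by rewrite -[X in X <= _]mulr1; apply: ler_wpM2l.
  lra.
have hm : m <= m * Pk k by rewrite -[X in X <= _]mulr1; apply: ler_wpM2l.
have hE : l%:R * E <= l%:R * E * Pk k.
  by rewrite -[X in X <= _]mulr1; apply: ler_wpM2l.
have ht := tau_upper h.
set P := Pk k in P1 P0 hm hE ht e1 e2 *; set an := A ^+ n in e1 *; set al := A ^+ l in e1 e2 *.
set t1v := T1 in ht *; set t2v := T2 in e1 e2 *; clearbody P an al t1v t2v.
lra.
Qed.

End Main.
Unset Implicit Arguments.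
Set Strict Implicit.

Theorem lemma4p6 (R : realType) (X : completeNormedModType R)
  (ip : X -> X -> R) (J : X -> R) (g : X -> X)
  (x0 : X) (eps : R) (l : nat) (c0 : R) (C0 : \bar R) (cs c1 c2 : R)
  (use_g : bool) (beta sigma eta L : R)
  (x d : nat -> X) (alpha : nat -> R) (Sop : nat -> X -> X) (tau : nat -> R) :
  (* X is a real Hilbert space with inner product ip *)
  is_inner_product ip ->
  (* parameters of Algorithm SLBFGS *)
  0 <= eps -> 0 <= c0 -> (c0%:E <= C0)%E -> 0 < cs -> 0 < c1 -> 0 < c2 ->
  0 < tau 0 -> x 0%N = x0 ->
  (* the iterations of Algorithm SLBFGS (as long as it has not stopped) *)
  (forall k, running g x eps k -> sym_psd_bounded ip (Sop k)) ->
  (forall k, running g x eps k ->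
     Bk ip g x cs l Sop tau k (d k) = - g (x k)) ->
  (forall k, running g x eps k -> x k.+1 = x k + alpha k *: d k) ->
  (forall k, running g x eps k.+1 ->
     tau_rule ip g x c0 C0 c1 c2 use_g Sop tau k) ->
  (* the variant [tau^s, tau^g] is only used together with C0 = oo *)
  (use_g -> C0 = +oo%E) ->
  (* assumption 1 *)
  C1_with_gradient ip J g -> (exists m : R, forall u, m <= J u) ->
  (* assumption 2 *)
  0 < L ->
  (forall u v, Omega J x0 u -> Omega J x0 v -> `|g u - g v| <= L * `|u - v|) ->
  (* assumption 3 *)
  (exists M : R, forall k, running g x eps k -> (opnorm (Sop k) <= M%:E)%E) ->
  (* assumption 4 *)
  ((0 < beta < 1 /\ 0 < sigma < 1 /\
    (forall k, running g x eps k ->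
       armijo_backtracking ip J g beta sigma (x k) (d k) (alpha k)) /\
    exists2 delta : R, 0 < delta &
      (unif_cont_on (Omega_delta J x0 delta) J \/
       unif_cont_on (Omega_delta J x0 delta) g))
   \/
   (0 < sigma < eta /\ eta < 1 /\
    (forall k, running g x eps k ->
       wolfe_powell ip J g sigma eta (x k) (d k) (alpha k)))) ->
  (* assumption 5 *)
  (c0 = 0 -> exists M : R, forall k, running g x eps k ->
     exists2 B0inv : X -> X, is_inverse (B0_ Sop tau k) B0inv &
       (opnorm B0inv <= M%:E)%E) ->
  (* assumption 6 *)
  (C0 = +oo%E -> use_g \/
     (C2 g /\
      (forall k, running g x eps k.+1 -> forall u v,
         Gbar_form ip g x Sop k u v = Gbar_form ip g x Sop k v u /\
         0 <= Gbar_form ip g x Sop k u u) /\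
      (exists M : R, forall k, running g x eps k.+1 -> forall u v,
         `|Gbar_form ip g x Sop k u v| <= M * `|u| * `|v|))) ->
  (* conclusion *)
  exists2 C : R, 0 < C &
    forall k, running g x eps k ->
      exists2 Binv : X -> X, is_inverse (Bk ip g x cs l Sop tau k) Binv &
        (opnorm (Bk ip g x cs l Sop tau k) + opnorm Binv
           <= (C * Num.max 1 (`|g (x k)| `^ (- c2)))%:E)%E.
Proof.
move=> Hip eps0 c00 cC0 cs0 c10 c20 tau0 x00 HS HBd Hx Htau Hug HC1 Hbelow L0 HL
  [M HM] Hls H5 H6.
pose m := Num.max M 0.
have m0 : 0 <= m by rewrite /m le_max lexx orbT.
have HM' : forall k, running g x eps k -> (opnorm (Sop k) <= m%:E)%E.
  by move=> k h; apply: le_trans (HM k h) _; rewrite lee_fin /m le_max lexx.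
have Hls' : forall k, running g x eps k -> exists a, [/\ x k.+1 = x k + a *: d k,
    0 <= a * sigma &
    J (x k + a *: d k) <= J (x k) + a * sigma * ip (g (x k)) (d k)].
  move=> k h; case: Hls => [[/andP[b0 b1] [/andP[s0 s1] [bt _]]]|
      [/andP[s0 _] [_ wp]]].
    have [i [ea [harm _]]] := bt k h.
    exists (alpha k); split; first exact: Hx.
      by rewrite ea mulr_ge0 ?exprn_ge0 ?ltW.
    by rewrite ea; exact: harm.
  have [a0 [harm _]] := wp k h.
  exists (alpha k); split; first exact: Hx.
    by rewrite mulr_ge0 ?ltW.
  exact: harm.
have [M5 HM5] : exists M5 : R, c0 = 0 -> forall k, running g x eps k ->
    exists2 B0inv : X -> X, is_inverse (B0_ Sop tau k) B0inv &
      (opnorm B0inv <= M5%:E)%E.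
  have [e|e] := eqVneq c0 0.
    by have [M5 hM5] := H5 e; exists M5.
  by exists 0 => e'; move: e; rewrite e' eqxx.
have [MG HMG] : exists MG : R, forall k, running g x eps k.+1 -> C0 = +oo%E ->
    ~~ use_g -> 0 < ip (y_ g x k - Sop k.+1 (s_ x k)) (s_ x k) ->
    `|y_ g x k - Sop k.+1 (s_ x k)| ^+ 2 /
       ip (y_ g x k - Sop k.+1 (s_ x k)) (s_ x k) <= MG.
  have [e|e] := eqVneq C0 +oo%E; last by exists 0 => k _ e'; move: e; rewrite e' eqxx.
  case: (H6 e) => [ug|[C2g [hsp [MG hMG]]]].
    by exists 0 => k _ _; rewrite ug.
  exists MG => k h _ _ rho0.
  exact: (gbar_tauz Hip C2g (hsp k h) (hMG k h) rho0).
exact: (final Hip eps0 c00 cC0 cs0 c10 tau0 x00 HS HBd Htau L0 HL m0 HM' Hls' HM5 HMG).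
Qed.
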